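(* The algebra $\mathcal{O}_{nc}(\mathrm{GL}_2)$ has a $k$-basis consisting of the elements $\delta^{x_0}w_1\delta^{x_1}w_2\cdots w_n\delta^{x_n}$ ($n\ge0$) where $x_i\in\mathbb{Z}$, $x_i\ne0$ for $0<i<n$, each $w_i$ is a non-empty word in $a,b,c,d$ with non-decreasing row index (no letter from $\{c,d\}$ is followed by a letter from $\{a,b\}$), and whenever $x_i=-1$ with $0<i<n$, the letter immediately to the left of $\delta^{-1}$ and the letter immediately to the right of it have non-decreasing column index (i.e. the pair is not (letter of $\{b,d\}$, letter of $\{a,c\}$)).
   Context: $\mathcal{O}_{nc}(\mathrm{GL}_2)$ is the $k$-algebra generated by $a,b,c,d,\delta,\delta^{-1}$ subject to $ac=ca$, $bd=db$, $ad-cb=\delta=da-bc$, $\delta\delta^{-1}=1=\delta^{-1}\delta$, $a\delta^{-1}d-b\delta^{-1}c=1=d\delta^{-1}a-c\delta^{-1}b$, $b\delta^{-1}a=a\delta^{-1}b$, $c\delta^{-1}d=d\delta^{-1}c$. Row index: $a,b$ have row index 1 and $c,d$ row index 2; column index: $a,c$ have column index 1 and $b,d$ column index 2 (entries of the matrix $\begin{pmatrix}a&b\\c&d\end{pmatrix}$). *)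

(* Defs.v *)
From HB Require Import structures.
From mathcomp Require Import all_boot all_order all_algebra.
Set Implicit Arguments. Unset Strict Implicit. Unset Printing Implicit Defensive.
Import Order.TTheory GRing.Theory Num.Theory.
Local Open Scope ring_scope.

(* The six generators of the free algebra: a, b, c, d, delta, delta^{-1}. *)
Inductive gen := ga | gb | gc | gd | gdel | gdeli.

Definition nat_of_gen (g : gen) : nat :=
  match g with ga => 0 | gb => 1 | gc => 2 | gd => 3 | gdel => 4 | gdeli => 5 end%N.
Definition gen_of_nat (n : nat) : option gen :=
  match n with 0 => Some ga | 1 => Some gb | 2 => Some gc | 3 => Some gd
  | 4 => Some gdel | 5 => Some gdeli | _ => None end%N.
Lemma nat_of_genK : pcancel nat_of_gen gen_of_nat. Proof. by case. Qed.
HB.instance Definition _ := Equality.copy gen (pcan_type nat_of_genK).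

Definition word := seq gen.

(* Elements of the free algebra: formal finite sums  sum c_i * w_i. *)
Definition fpoly (k : fieldType) := seq (k * word).

Definition fcoef (k : fieldType) (p : fpoly k) (w : word) : k :=
  \sum_(t <- p) (if t.2 == w then t.1 else 0).

Definition feq (k : fieldType) (p q : fpoly k) : Prop :=
  forall w, fcoef p w = fcoef q w.

Definition fmon (k : fieldType) (w : word) : fpoly k := [:: (1, w)].
Definition fadd (k : fieldType) (p q : fpoly k) : fpoly k := p ++ q.
Definition fscale (k : fieldType) (c : k) (p : fpoly k) : fpoly k :=
  [seq (c * t.1, t.2) | t <- p].
Definition fsub (k : fieldType) (p q : fpoly k) : fpoly k := p ++ fscale (-1) q.
Definition fmul (k : fieldType) (p q : fpoly k) : fpoly k :=
  [seq (s.1 * t.1, s.2 ++ t.2) | s <- p, t <- q].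

(* The defining relations of O_nc(GL_2), as elements lhs - rhs. *)
Definition rels (k : fieldType) : seq (fpoly k) :=
  let m := @fmon k in
  [:: fsub (m [:: ga; gc]) (m [:: gc; ga]);
      fsub (m [:: gb; gd]) (m [:: gd; gb]);
      fsub (fsub (m [:: ga; gd]) (m [:: gc; gb])) (m [:: gdel]);
      fsub (fsub (m [:: gd; ga]) (m [:: gb; gc])) (m [:: gdel]);
      fsub (m [:: gdel; gdeli]) (m [::]);
      fsub (m [:: gdeli; gdel]) (m [::]);
      fsub (fsub (m [:: ga; gdeli; gd]) (m [:: gb; gdeli; gc])) (m [::]);
      fsub (fsub (m [:: gd; gdeli; ga]) (m [:: gc; gdeli; gb])) (m [::]);
      fsub (m [:: gb; gdeli; ga]) (m [:: ga; gdeli; gb]);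
      fsub (m [:: gc; gdeli; gd]) (m [:: gd; gdeli; gc]) ].

(* p lies in the two-sided ideal generated by rels: p is a finite k-linear
   combination of elements u * r * v with r a relation and u, v words. *)
Definition in_ideal (k : fieldType) (p : fpoly k) : Prop :=
  exists s : seq (k * word * fpoly k * word),
    (forall t, t \in s -> t.1.2 \in rels k) /\
    feq p (flatten [seq fscale t.1.1.1
                        (fmul (fmul (fmon k t.1.1.2) t.1.2) (fmon k t.2)) | t <- s]).

(* Row and column indices of the letters of the matrix (a b ; c d). *)
Definition is_abcd (g : gen) : bool :=
  match g with ga | gb | gc | gd => true | _ => false end.
Definition row_idx (g : gen) : nat :=
  match g with ga | gb => 1 | gc | gd => 2 | _ => 0 end%N.
Definition col_idx (g : gen) : nat :=
  match g with ga | gc => 1 | gb | gd => 2 | _ => 0 end%N.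

Definition good_word (w : word) : bool :=
  [&& w != [::], all is_abcd w & sorted leq (map row_idx w)].

Definition dpow (x : int) : word :=
  match x with Posz n => nseq n gdel | Negz n => nseq n.+1 gdeli end.

(* Conditions on the list [(w_1,x_1); ...; (w_n,x_n)]:
   each w_i is good; for 0 < i < n, x_i <> 0, and if x_i = -1 then
   col(last letter of w_i) <= col(first letter of w_{i+1}). *)
Fixpoint ok_tail (ps : seq (word * int)) : bool :=
  match ps with
  | [::] => true
  | (w, x) :: ps' =>
      [&& good_word w,
          (if ps' is (w', _) :: _ then
             (x != 0) && ((x == -1) ==> (col_idx (last ga w) <= col_idx (head ga w'))%N)
           else true)
        & ok_tail ps']
  end.

Definition build (x0 : int) (ps : seq (word * int)) : word :=
  dpow x0 ++ flatten [seq p.1 ++ dpow p.2 | p <- ps].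

Definition basis_word (w : word) : Prop :=
  exists (x0 : int) (ps : seq (word * int)), ok_tail ps /\ w = build x0 ps.

(* Main.v *)
Require Import Defs.
From HB Require Import structures.
From mathcomp Require Import all_boot all_order all_algebra.
From mathcomp Require Import zify ring lra.
From Stdlib Require Import Lia.
Set Implicit Arguments. Unset Strict Implicit. Unset Printing Implicit Defensive.
Import Order.TTheory GRing.Theory Num.Theory.
Local Open Scope ring_scope.

Definition rules : seq (word * seq (int * word)) :=
  [:: ([:: gc; ga], [:: (1%Z, [:: ga; gc])]);
      ([:: gd; gb], [:: (1%Z, [:: gb; gd])]);
      ([:: gc; gb], [:: (1%Z, [:: ga; gd]); ((-1)%Z, [:: gdel])]);
      ([:: gd; ga], [:: (1%Z, [:: gb; gc]); (1%Z, [:: gdel])]);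
      ([:: gdel; gdeli], [:: (1%Z, [::])]);
      ([:: gdeli; gdel], [:: (1%Z, [::])]);
      ([:: gb; gdeli; gc], [:: (1%Z, [:: ga; gdeli; gd]); ((-1)%Z, [::])]);
      ([:: gd; gdeli; ga], [:: (1%Z, [:: gc; gdeli; gb]); (1%Z, [::])]);
      ([:: gb; gdeli; ga], [:: (1%Z, [:: ga; gdeli; gb])]);
      ([:: gd; gdeli; gc], [:: (1%Z, [:: gc; gdeli; gd])])].

Definition lhs (i : nat) : word := (nth ([::], [::]) rules i).1.
Definition rhs (i : nat) : seq (int * word) := (nth ([::], [::]) rules i).2.
Definition eps (i : nat) : int := nth 1%Z [:: -1; -1; -1; 1; 1; 1; -1; 1; 1; -1]%Z i.

Definition ip := seq (int * word).
Definition icoef (p : ip) (w : word) : int := \sum_(t <- p) (if t.2 == w then t.1 else 0).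
Definition ictx (A : word) (p : ip) (B : word) : ip := [seq (t.1, A ++ t.2 ++ B) | t <- p].
Definition iscale (c : int) (p : ip) : ip := [seq (c * t.1, t.2) | t <- p].
Definition relp (i : nat) : ip := (1%Z, lhs i) :: [seq (- t.1, t.2) | t <- rhs i].
Definition iterm (t : int * word * nat * word) : ip := iscale t.1.1.1 (ictx t.1.1.2 (relp t.1.2) t.2).
Definition icombo (C : seq (int * word * nat * word)) : ip := flatten (map iterm C).
Definition ieqb (p q : ip) : bool :=
  all (fun w => icoef p w == icoef q w) (map snd p ++ map snd q).

Lemma icoef0 p w : w \notin map snd p -> icoef p w = 0.
Proof.
elim: p => [|t p IH]; first by rewrite /icoef big_nil.
rewrite /icoef big_cons /= inE negb_or => /andP[h1 h2].
by rewrite eq_sym (negbTE h1) add0r -/(icoef p w) IH.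
Qed.

Lemma ieqbP p q : ieqb p q -> forall w, icoef p w = icoef q w.
Proof.
move=> /allP H w.
case: (boolP (w \in map snd p ++ map snd q)) => [/H /eqP //|].
by rewrite mem_cat negb_or => /andP[h1 h2]; rewrite !icoef0.
Qed.

Definition digit (g : gen) : nat := (nat_of_gen g).+1.
Definition M (w : word) : nat := foldl (fun acc g => acc * 7 + digit g)%N 0%N w.

Lemma M_cat_gen (a : nat) (w : word) :
  foldl (fun acc g => acc * 7 + digit g)%N a w = (a * 7 ^ size w + M w)%N.
Proof.
rewrite /M; elim: w a => [|g w IH] a /=; first by rewrite muln1 addn0.
rewrite IH (IH (0 * 7 + digit g)%N) expnS mul0n add0n mulnDl addnA; congr (_ + _)%N.
by rewrite -mulnA (mulnC 7).
Qed.

Lemma M_cat u v : M (u ++ v) = (M u * 7 ^ size v + M v)%N.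
Proof. by rewrite {1}/M foldl_cat M_cat_gen. Qed.

Lemma digit_bound g : (0 < digit g <= 6)%N.
Proof. by case: g. Qed.

Lemma M_bounds w : (7 ^ size w <= 6 * M w + 1)%N /\ (M w < 7 ^ size w)%N.
Proof.
elim/last_ind: w => [|w g [IH1 IH2]]; first by [].
rewrite -cats1 M_cat size_cat /= expnD expn1 /M /= -/(M [::]) /=.
have := digit_bound g; move: (digit g) => dg /andP[h1 h2].
rewrite /M /= in IH1 IH2 *. set m := foldl _ _ _ in IH1 IH2 *.
split; nia.
Qed.

Local Close Scope ring_scope.

Lemma M_size_le u s : (M u < M s)%N -> (size u <= size s)%N.
Proof.
move=> H; case: (leqP (size u) (size s)) => // Hlt.
have [u1 u2] := M_bounds u; have [s1 s2] := M_bounds s.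
have : (7 * 7 ^ size s <= 7 ^ size u)%N.
  by rewrite -expnS leq_exp2l.
nia.
Qed.

Lemma M_mono L u s R : (M u < M s)%N -> (M (L ++ u ++ R) < M (L ++ s ++ R))%N.
Proof.
move=> H; have Hs := M_size_le H.
rewrite !M_cat !size_cat !expnD.
have hab : (7 ^ size u <= 7 ^ size s)%N by rewrite leq_exp2l.
have hc : (0 < 7 ^ size R)%N by rewrite expn_gt0.
move: (7 ^ size u)%N (7 ^ size s)%N (7 ^ size R)%N hab hc => a b c hab hc.
have h1 : (M L * a <= M L * b)%N by rewrite leq_mul2l hab orbT.
have h : (M L * a + M u < M L * b + M s)%N by lia.
have : ((M L * a + M u) * c < (M L * b + M s) * c)%N by rewrite ltn_pmul2r.
nia.
Qed.

Lemma M_size_eq u v : M u = M v -> size u = size v.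
Proof.
move=> H.
have [u1 u2] := M_bounds u; have [v1 v2] := M_bounds v.
case: (ltngtP (size u) (size v)) => // h.
  have : (7 * 7 ^ size u <= 7 ^ size v)%N by rewrite -expnS leq_exp2l.
  nia.
have : (7 * 7 ^ size v <= 7 ^ size u)%N by rewrite -expnS leq_exp2l.
nia.
Qed.

Lemma digit_inj : injective digit.
Proof. by case; case. Qed.

Lemma M_inj u v : M u = M v -> u = v.
Proof.
elim: u v => [|g u IH] [|h v] //.
- by move/M_size_eq.
- by move/M_size_eq.
move=> H; have Hs := M_size_eq H.
move: H; rewrite -(cat1s g) -(cat1s h) !M_cat.
case: Hs => Hs; rewrite Hs.
have [_ hu] := M_bounds u; have [_ hv] := M_bounds v.
rewrite Hs in hu.
move=> H. have Hd : forall x, M [:: x] = digit x by [].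
rewrite !Hd /= in H.
have H1 : digit g = digit h.
  have := congr1 (fun x => x %/ 7 ^ size v)%N H.
  rewrite !divnMDl ?expn_gt0 // (divn_small hu) (divn_small hv) !addn0; done.
have H2 : M u = M v by move: H; rewrite H1 => /addnI.
by rewrite (digit_inj H1) (IH _ H2).
Qed.

Local Open Scope ring_scope.

Lemma rhs_lt i : (i < 10)%N -> all (fun u => M u < M (lhs i))%N (map snd (rhs i)).
Proof. by do 10 (case: i => [|i] //). Qed.

Section K.
Variable k : fieldType.
Implicit Types p q : fpoly k.

Definition ctx (A : word) (p : fpoly k) (B : word) : fpoly k :=
  [seq (t.1, A ++ t.2 ++ B) | t <- p].
Definition emb (p : ip) : fpoly k := [seq (t.1%:~R, t.2) | t <- p].
Definition relk i := emb (relp i).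
Arguments relk : simpl never.
Definition term (t : k * word * nat * word) : fpoly k :=
  fscale t.1.1.1 (ctx t.1.1.2 (relk t.1.2) t.2).
Definition combo (C : seq (k * word * nat * word)) : fpoly k := flatten (map term C).

Lemma fcoef_nil w : fcoef ([::] : fpoly k) w = 0.
Proof. by rewrite /fcoef big_nil. Qed.

Lemma fcoef_cons t p w : fcoef (t :: p) w = (if t.2 == w then t.1 else 0) + fcoef p w.
Proof. by rewrite /fcoef big_cons. Qed.

Lemma fcoef_cat p q w : fcoef (p ++ q) w = fcoef p w + fcoef q w.
Proof. by rewrite /fcoef big_cat. Qed.

Lemma fcoef_scale c p w : fcoef (fscale c p) w = c * fcoef p w.
Proof.
rewrite /fcoef /fscale big_map mulr_sumr; apply: eq_bigr => t _ /=.
by case: ifP; rewrite ?mulr0.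
Qed.

Lemma fcoef_flatten (ps : seq (fpoly k)) w :
  fcoef (flatten ps) w = \sum_(p <- ps) fcoef p w.
Proof.
elim: ps => [|p ps IH]; first by rewrite big_nil fcoef_nil.
by rewrite (_ : flatten (p :: ps) = p ++ flatten ps) // fcoef_cat IH big_cons.
Qed.

Lemma fcoef_combo C w : fcoef (combo C) w = \sum_(t <- C) fcoef (term t) w.
Proof. by rewrite /combo fcoef_flatten big_map. Qed.

Lemma fcoef_combo_cat C D w : fcoef (combo (C ++ D)) w = fcoef (combo C) w + fcoef (combo D) w.
Proof. by rewrite /combo map_cat flatten_cat fcoef_cat. Qed.

Lemma fcoef_combo_cons t C w : fcoef (combo (t :: C)) w = fcoef (term t) w + fcoef (combo C) w.
Proof. by rewrite /combo (_ : map term (t :: C) = term t :: map term C) // fcoef_flatten big_cons -fcoef_flatten. Qed.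

Lemma fcoef_emb (p : ip) w : fcoef (emb p) w = (icoef p w)%:~R.
Proof.
rewrite /fcoef /icoef /emb big_map rmorph_sum; apply: eq_bigr => t _ /=.
by case: ifP.
Qed.

Lemma fcoef_term c L i R w :
  fcoef (term (c, L, i, R)) w = c * fcoef (ctx L (relk i) R) w.
Proof. by rewrite /term fcoef_scale. Qed.

Definition mid (A B w : word) : word := take (size w - size A - size B)%N (drop (size A) w).

Lemma mid_cat A x B : mid A B (A ++ x ++ B) = x.
Proof.
rewrite /mid drop_size_cat // !size_cat.
have -> : (size A + (size x + size B) - size A - size B = size x)%N by lia.
by rewrite take_size_cat.
Qed.

Lemma fcoef_ctx A p B w :
  fcoef (ctx A p B) w = if w == A ++ mid A B w ++ B then fcoef p (mid A B w) else 0.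
Proof.
rewrite /fcoef /ctx big_map.
case: eqP => [Hw|Hw].
  apply: eq_bigr => t _ /=; rewrite {1}Hw.
  case: (eqVneq t.2 (mid A B w)) => [->|ne]; first by rewrite eqxx.
  case: eqP => // /(congr1 (mid A B)); rewrite !mid_cat => h.
  by rewrite h eqxx in ne.
rewrite big1 // => t _ /=; case: eqP => // Hw2.
by exfalso; apply: Hw; rewrite -Hw2 mid_cat.
Qed.

Lemma fcoef_out p w : (forall t, t \in p -> t.2 != w) -> fcoef p w = 0.
Proof.
move=> H; rewrite /fcoef big_seq big1 // => t /H; by case: eqP.
Qed.

Lemma feq_ctx A B p q : (forall w, fcoef p w = fcoef q w) ->
  forall w, fcoef (ctx A p B) w = fcoef (ctx A q B) w.
Proof. by move=> H w; rewrite !fcoef_ctx H. Qed.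

Lemma ctx_cat A B p q : ctx A (p ++ q) B = ctx A p B ++ ctx A q B.
Proof. by rewrite /ctx map_cat. Qed.

Lemma ctx_scale A B c p : ctx A (fscale c p) B = fscale c (ctx A p B).
Proof. by rewrite /ctx /fscale -!map_comp. Qed.

Lemma ctx_ctx A B L R p : ctx A (ctx L p R) B = ctx (A ++ L) p (R ++ B).
Proof. by rewrite /ctx -map_comp; apply: eq_map => t /=; rewrite !catA. Qed.

Lemma emb_ictx A B (p : ip) : emb (ictx A p B) = ctx A (emb p) B.
Proof. by rewrite /emb /ictx /ctx -!map_comp. Qed.

Lemma icoef_cat (p q : ip) w : icoef (p ++ q) w = icoef p w + icoef q w.
Proof. by rewrite /icoef big_cat. Qed.

Lemma icoef_scale c (p : ip) w : icoef (iscale c p) w = c * icoef p w.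
Proof.
rewrite /icoef /iscale big_map mulr_sumr; apply: eq_bigr => t _ /=.
by case: ifP; rewrite ?mulr0.
Qed.

Lemma icoef_flatten (ps : seq ip) w : icoef (flatten ps) w = \sum_(p <- ps) icoef p w.
Proof.
elim: ps => [|p ps IH]; first by rewrite big_nil /icoef big_nil.
by rewrite (_ : flatten (p :: ps) = p ++ flatten ps) // icoef_cat IH big_cons.
Qed.

Definition embC (C : seq (int * word * nat * word)) : seq (k * word * nat * word) :=
  [seq (t.1.1.1%:~R, t.1.1.2, t.1.2, t.2) | t <- C].

Lemma fcoef_combo_emb C w : fcoef (combo (embC C)) w = (icoef (icombo C) w)%:~R.
Proof.
rewrite fcoef_combo /icombo icoef_flatten big_map big_map rmorph_sum.
apply: eq_bigr => [[[[c L] i] R]] _.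
rewrite fcoef_term; change (iterm (c,L,i,R)) with (iscale c (ictx L (relp i) R)).
rewrite icoef_scale rmorphM /=; congr (_ * _).
by rewrite -fcoef_emb /= emb_ictx.
Qed.

Definition ctxC A B (C : seq (k * word * nat * word)) : seq (k * word * nat * word) :=
  [seq (t.1.1.1, A ++ t.1.1.2, t.1.2, t.2 ++ B) | t <- C].

Lemma ctx_term_aux A B L R c (l : fpoly k) :
  fscale c (ctx (A ++ L) l (R ++ B)) = ctx A (fscale c (ctx L l R)) B.
Proof. by elim: l => //= x l ->; rewrite !catA. Qed.

Lemma fcoef_combo_ctx A B C w : fcoef (combo (ctxC A B C)) w = fcoef (ctx A (combo C) B) w.
Proof.
rewrite /combo /ctx map_flatten /ctxC -map_comp -map_comp fcoef_flatten fcoef_flatten.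
rewrite !big_map; apply: eq_bigr => t _.
congr fcoef; rewrite /term; exact: ctx_term_aux.
Qed.

Definition scaleC (c : k) (C : seq (k * word * nat * word)) : seq (k * word * nat * word) :=
  [seq (c * t.1.1.1, t.1.1.2, t.1.2, t.2) | t <- C].

Lemma fcoef_combo_scale c C w : fcoef (combo (scaleC c C)) w = c * fcoef (combo C) w.
Proof.
rewrite !fcoef_combo big_map mulr_sumr; apply: eq_bigr => [[[[c' L] i] R]] _.
by rewrite !fcoef_term /= mulrA.
Qed.

Definition occ (L : word) (i : nat) (R : word) : word := L ++ lhs i ++ R.
Definition tword (t : k * word * nat * word) : word := occ t.1.1.2 t.1.2 t.2.

Lemma relk_eq i : relk i = (1, lhs i) :: emb [seq (- t.1, t.2) | t <- rhs i].
Proof. by []. Qed.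

Lemma ctx_relk_words L i R t :
  t \in ctx L (emb [seq (- t.1, t.2) | t <- rhs i]) R ->
  exists u, u \in map snd (rhs i) /\ t.2 = L ++ u ++ R.
Proof.
case/mapP => x /mapP [y /mapP [z zin ->] ->] -> /=.
by exists z.2; split => //; apply: map_f.
Qed.

Lemma term_zero L i R w : (i < 10)%N -> w != occ L i R -> (M (occ L i R) <= M w)%N ->
  fcoef (ctx L (relk i) R) w = 0.
Proof.
move=> Hi Hw HM.
rewrite relk_eq /ctx map_cons fcoef_cons /= eq_sym (negbTE Hw) add0r.
apply: fcoef_out => t /ctx_relk_words [u [uin ->]].
have /allP /(_ _ uin) := rhs_lt Hi.
move=> /(M_mono L R) h; apply/eqP => E; rewrite E /occ in h.
rewrite /occ in HM; lia.
Qed.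

Lemma term_lead L i R : (i < 10)%N -> fcoef (ctx L (relk i) R) (occ L i R) = 1.
Proof.
move=> Hi.
rewrite relk_eq /ctx map_cons fcoef_cons /= eqxx.
rewrite (_ : fcoef _ _ = 0) ?addr0 //.
apply: fcoef_out => t /ctx_relk_words [u [uin ->]].
have /allP /(_ _ uin) := rhs_lt Hi.
move=> /(M_mono L R) h; apply/eqP => E; rewrite E /occ in h; lia.
Qed.
End K.
Arguments relk : simpl never.
Arguments ctx : simpl never.

Section Disj.
Variable k : fieldType.
Variables (L Y R' w : word).

Definition Bs (P Q : fpoly k) : k :=
  \sum_(x <- P) \sum_(y <- Q) x.1 * y.1 * (L ++ x.2 ++ Y ++ y.2 ++ R' == w)%:R.

Lemma Bs_consl a v P Q : Bs ((a, v) :: P) Q = a * Bs [:: (1, v)] Q + Bs P Q.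
Proof.
rewrite /Bs !big_cons big_nil addr0 mulr_sumr; congr (_ + _).
by apply: eq_bigr => y _ /=; rewrite mul1r mulrA.
Qed.

Lemma Bs_consr a v P Q : Bs P ((a, v) :: Q) = a * Bs P [:: (1, v)] + Bs P Q.
Proof.
rewrite /Bs mulr_sumr -big_split /=; apply: eq_bigr => x _.
by rewrite !big_cons big_nil addr0 /= mulr1; congr (_ + _); ring.
Qed.

Lemma Bs_nill Q : Bs [::] Q = 0.
Proof. by rewrite /Bs big_nil. Qed.

Lemma Bs_nilr P : Bs P [::] = 0.
Proof. by rewrite /Bs big1 // => x _; rewrite big_nil. Qed.

Lemma Bs_ctxr P v : fcoef (ctx L P (Y ++ v ++ R')) w = Bs P [:: (1, v)].
Proof.
rewrite /fcoef /ctx /Bs big_map; apply: eq_bigr => x _.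
rewrite big_cons big_nil addr0 /= mulr1.
by case: eqP => _; rewrite ?mulr1 ?mulr0.
Qed.

Lemma Bs_ctxl Q v : fcoef (ctx (L ++ v ++ Y) Q R') w = Bs [:: (1, v)] Q.
Proof.
rewrite /fcoef /ctx /Bs big_map big_cons big_nil addr0 /=; apply: eq_bigr => y _.
rewrite mul1r -!catA /=.
by case: eqP => _; rewrite ?mulr1 ?mulr0.
Qed.


Lemma Bs_embr P (f : ip) :
  Bs P (emb k f) = \sum_(t <- f) t.1%:~R * Bs P [:: (1, t.2)].
Proof.
elim: f => [|[c v] f IH]; first by rewrite Bs_nilr big_nil.
change (emb k ((c, v) :: f)) with ((c%:~R, v) :: emb k f).
by rewrite Bs_consr IH big_cons.
Qed.

Lemma Bs_embl Q (f : ip) :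
  Bs (emb k f) Q = \sum_(t <- f) t.1%:~R * Bs [:: (1, t.2)] Q.
Proof.
elim: f => [|[c v] f IH]; first by rewrite Bs_nill big_nil.
change (emb k ((c, v) :: f)) with ((c%:~R, v) :: emb k f).
by rewrite Bs_consl IH big_cons.
Qed.

Lemma Bs_negl (f : ip) Q : Bs (emb k [seq (- t.1, t.2) | t <- f]) Q = - Bs (emb k f) Q.
Proof.
rewrite (Bs_embl Q [seq (- t.1, t.2) | t <- f]) (Bs_embl Q f) big_map -sumrN; apply: eq_bigr => t _ /=.
by rewrite mulrNz mulNr.
Qed.

Lemma Bs_negr (f : ip) P : Bs P (emb k [seq (- t.1, t.2) | t <- f]) = - Bs P (emb k f).
Proof.
rewrite (Bs_embr P [seq (- t.1, t.2) | t <- f]) (Bs_embr P f) big_map -sumrN; apply: eq_bigr => t _ /=.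
by rewrite mulrNz mulNr.
Qed.

End Disj.

Definition disjD (k : fieldType) (L Y R' : word) (i j : nat) : seq (k * word * nat * word) :=
  [seq (t.1%:~R, L, i, Y ++ t.2 ++ R') | t <- rhs j] ++
  [seq (- t.1%:~R, L ++ t.2 ++ Y, j, R') | t <- rhs i].

Lemma disj_ok (k : fieldType) L Y R' i j w :
  fcoef (ctx L (relk k i) (Y ++ lhs j ++ R')) w =
  fcoef (ctx (L ++ lhs i ++ Y) (relk k j) R') w + fcoef (combo (disjD k L Y R' i j)) w.
Proof.
rewrite fcoef_combo_cat !fcoef_combo !big_map.
have E1 : \sum_(t <- rhs j) fcoef (term (t.1%:~R, L, i, Y ++ t.2 ++ R')) w =
          Bs L Y R' w (relk k i) (emb k (rhs j)).
  rewrite Bs_embr; apply: eq_bigr => t _; by rewrite fcoef_term Bs_ctxr.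
have E2 : \sum_(t <- rhs i) fcoef (term (- t.1%:~R, L ++ t.2 ++ Y, j, R')) w =
          - Bs L Y R' w (emb k (rhs i)) (relk k j).
  rewrite Bs_embl -sumrN; apply: eq_bigr => t _; by rewrite fcoef_term Bs_ctxl mulNr.
rewrite E1 E2 Bs_ctxr Bs_ctxl.
set B := Bs L Y R' w.
have Hl : forall Q, B (relk k i) Q = B [:: (1, lhs i)] Q - B (emb k (rhs i)) Q.
  by move=> Q; rewrite /B relk_eq Bs_consl Bs_negl mul1r.
have Hr : forall P, B P (relk k j) = B P [:: (1, lhs j)] - B P (emb k (rhs j)).
  by move=> P; rewrite /B relk_eq Bs_consr Bs_negr mul1r.
rewrite Hl (Hl (emb k (rhs j))) Hr (Hr (emb k (rhs i))).
ring.
Qed.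


Definition icoefc (p : ip) (w : word) : int :=
  foldr (fun t acc => (if t.2 == w then t.1 else 0) + acc) 0 p.

Lemma icoefcE p w : icoefc p w = icoef p w.
Proof. by elim: p => [|t p IH]; rewrite /icoef ?big_nil ?big_cons //= IH. Qed.

Definition ieqc (p q : ip) : bool :=
  all (fun w => icoefc p w == icoefc q w) (map snd p ++ map snd q).

Lemma ieqcP p q : ieqc p q -> forall w, icoef p w = icoef q w.
Proof.
move=> H; apply: ieqbP; move: H; rewrite /ieqc /ieqb.
by under eq_all do rewrite !icoefcE.
Qed.

Definition cert (i j p : nat) : seq (int * word * nat * word) :=
  match i, j, p with
  | 1, 6, 1 => [:: (1%Z, [::], 3, [:: gdeli; gd]); ((-1)%Z, [:: gb], 9, [::]); (1%Z, [::], 4, [:: gd])]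
  | 1, 8, 1 => [:: (1%Z, [::], 3, [:: gdeli; gb]); ((-1)%Z, [:: gb], 7, [::]); (1%Z, [::], 4, [:: gb])]
  | 2, 6, 1 => [:: (1%Z, [::], 0, [:: gdeli; gd]); ((-1)%Z, [:: ga], 9, [::]); (1%Z, [::], 4, [:: gc])]
  | 2, 8, 1 => [:: (1%Z, [::], 0, [:: gdeli; gb]); ((-1)%Z, [:: ga], 7, [::]); (1%Z, [::], 4, [:: ga])]
  | 4, 5, 1 => [:: ]
  | 5, 4, 1 => [:: ]
  | 6, 0, 2 => [:: (1%Z, [::], 8, [:: gc]); ((-1)%Z, [:: ga; gdeli], 3, [::]); ((-1)%Z, [:: ga], 5, [::])]
  | 6, 2, 2 => [:: (1%Z, [::], 8, [:: gd]); ((-1)%Z, [:: ga; gdeli], 1, [::]); ((-1)%Z, [:: gb], 5, [::])]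
  | 9, 0, 2 => [:: (1%Z, [::], 7, [:: gc]); ((-1)%Z, [:: gc; gdeli], 3, [::]); ((-1)%Z, [:: gc], 5, [::])]
  | 9, 2, 2 => [:: (1%Z, [::], 7, [:: gd]); ((-1)%Z, [:: gc; gdeli], 1, [::]); ((-1)%Z, [:: gd], 5, [::])]
  | _, _, _ => [::] end%N.

Definition ioccw (c : int * word * nat * word) : word := c.1.1.2 ++ lhs c.1.2 ++ c.2.

Definition check_ov (i j p : nat) : bool :=
  let X := take p (lhs i) in
  let Z := drop p (lhs i) in
  let V := drop (size Z) (lhs j) in
  all (fun c => (c.1.2 < 10)%N && (M (ioccw c) < M (lhs i ++ V))%N) (cert i j p) &&
  ieqc (ictx [::] (relp i) V ++ iscale (-1) (ictx X (relp j) [::])) (icombo (cert i j p)).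

Definition chk3 (i j p : nat) : bool :=
  let Z := drop p (lhs i) in
  if (size (lhs j) <= size Z)%N then (prefix (lhs j) Z ==> (p == 0)%N && (i == j))
  else (prefix Z (lhs j) ==> check_ov i j p).

Definition check_all : bool :=
  all (fun i => all (fun j => all (chk3 i j) (iota 0 (size (lhs i)))) (iota 0 10)) (iota 0 10).

Lemma check_all_ok : check_all.
Proof. by vm_compute. Qed.

Lemma check_all_use i j p : (i < 10)%N -> (j < 10)%N -> (p < size (lhs i))%N -> chk3 i j p.
Proof.
move=> Hi Hj Hp.
have Hi' : i \in iota 0 10 by rewrite mem_iota.
have Hj' : j \in iota 0 10 by rewrite mem_iota.
have Hp' : p \in iota 0 (size (lhs i)) by rewrite mem_iota.
have H1 := allP check_all_ok i Hi'.
have H2 := allP H1 j Hj'.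
exact: allP H2 p Hp'.
Qed.

Lemma cat_split (a b c d : word) : a ++ b = c ++ d -> (size a <= size c)%N ->
  c = a ++ drop (size a) c /\ b = drop (size a) c ++ d.
Proof.
elim: a c => [|x a IH] [|y c] //= E H.
case: E => -> E; have [h1 h2] := IH _ E H.
by split => //; rewrite -h1.
Qed.

Section Ov.
Variable k : fieldType.

Lemma fcoef_ctx_relk A i B w :
  fcoef (ctx A (relk k i) B) w = (icoef (ictx A (relp i) B) w)%:~R.
Proof. by rewrite /relk -emb_ictx fcoef_emb. Qed.

Lemma ov_ok i j p A B w :
  check_ov i j p ->
  let X := take p (lhs i) in
  let Z := drop p (lhs i) in
  let V := drop (size Z) (lhs j) in
  fcoef (ctx A (relk k i) (V ++ B)) w =
  fcoef (ctx (A ++ X) (relk k j) B) w + fcoef (combo (ctxC A B (embC k (cert i j p)))) w.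
Proof.
move=> /andP[_ Hc] X Z V.
have Hin : forall w', fcoef (ctx [::] (relk k i) V ++ fscale (-1) (ctx X (relk k j) [::])) w' =
                      fcoef (combo (embC k (cert i j p))) w'.
  move=> w'; rewrite fcoef_combo_emb -(ieqcP Hc w') icoef_cat icoef_scale.
  rewrite fcoef_cat fcoef_scale !fcoef_ctx_relk rmorphD rmorphM /=.
  by rewrite mulrNz.
rewrite fcoef_combo_ctx -(feq_ctx A B Hin) ctx_cat ctx_scale fcoef_cat fcoef_scale !ctx_ctx.
by rewrite cats0 cat0s; ring.
Qed.


Definition goodD (n : nat) (D : seq (k * word * nat * word)) :=
  forall t, t \in D -> (t.1.2 < 10)%N /\ (M (tword t) < n)%N.

Lemma goodD_cat n C D : goodD n C -> goodD n D -> goodD n (C ++ D).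
Proof. by move=> h1 h2 t; rewrite mem_cat => /orP[/h1|/h2]. Qed.

Lemma two_occ_le L i R L' j R' : (i < 10)%N -> (j < 10)%N ->
  occ L i R = occ L' j R' -> (size L <= size L')%N ->
  exists D, goodD (M (occ L i R)) D /\
   forall w, fcoef (ctx L (relk k i) R) w = fcoef (ctx L' (relk k j) R') w + fcoef (combo D) w.
Proof.
move=> Hi Hj E Hs.
have [EL' E2] := cat_split E Hs.
set X := drop (size L) L' in EL' E2.
case: (leqP (size (lhs i)) (size X)) => HX.
  have [EX E3] := cat_split E2 HX.
  set Y := drop (size (lhs i)) X in EX E3.
  exists (disjD k L Y R' i j); split.
    move=> t; rewrite mem_cat => /orP[] /mapP [u uin ->] /=; split => //;
      rewrite /tword /occ /= E3.
      have := allP (rhs_lt Hj) u.2 (map_f _ uin) => /(M_mono (L ++ lhs i ++ Y) R') h.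
      rewrite -?catA in h; rewrite -?catA; exact h.
    have := allP (rhs_lt Hi) u.2 (map_f _ uin) => /(M_mono L (Y ++ lhs j ++ R')) h.
    rewrite -?catA in h; rewrite -?catA; exact h.
  move=> w; rewrite E3 disj_ok EL' EX -?catA; done.
set p := size X.
have Hp : (p < size (lhs i))%N by [].
have [EX E3] := cat_split (esym E2) (ltnW HX).
rewrite -/p in EX E3.
set Z := drop p (lhs i) in EX E3.
have := check_all_use Hi Hj Hp; rewrite /chk3 -/Z.
case: (leqP (size (lhs j)) (size Z)) => HZ.
  have [EZ E4] := cat_split E3 HZ.
  have Hpre : prefix (lhs j) Z by apply/prefixP; eexists; exact: EZ.
  rewrite Hpre /= => /andP[/eqP p0 /eqP ij].
  have X0 : X = [::] by apply/eqP; rewrite -size_eq0 -/p p0.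
  subst j.
  have Zi : Z = lhs i by rewrite EX X0.
  have E0 : drop (size (lhs i)) Z = [::] by rewrite Zi drop_size.
  rewrite E0 /= in E4.
  exists [::]; split; first by [].
  move=> w; rewrite /combo /= fcoef_nil addr0 EL' X0 cats0 E4 //.
have HZ' : (size Z <= size (lhs j))%N by apply: ltnW.
have [EZ E4] := cat_split (esym E3) HZ'.
have Hpre : prefix Z (lhs j) by apply/prefixP; eexists; exact: EZ.
rewrite Hpre /= => Hov.
have HXt : X = take p (lhs i) by rewrite EX /p take_size_cat.
exists (ctxC L R' (embC k (cert i j p))); split.
  move=> t /mapP [t0 /mapP [c cin ->] ->] /=.
  move: Hov => /andP [/allP /(_ c cin) /andP [c1 c2] _]; split => //.
  rewrite /tword /occ /=.
  have := M_mono L R' c2; rewrite /ioccw -!catA.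
  by rewrite E4 -/Z.
move=> w; rewrite E4.
have := ov_ok L R' w Hov; rewrite /= -/Z -HXt => ->.
by rewrite EL'.
Qed.

End Ov.

Definition normalb (w : word) : bool := ~~ has (fun i => infix (lhs i) w) (iota 0 10).

Lemma occ_not_normal L i R : (i < 10)%N -> ~~ normalb (occ L i R).
Proof.
move=> Hi; rewrite /normalb negbK; apply/hasP; exists i; first by rewrite mem_iota.
exact: infix_infix.
Qed.

Section Ind.
Variable k : fieldType.

Lemma goodD_scale n c (D : seq (k * word * nat * word)) : goodD n D -> goodD n (scaleC c D).
Proof. by move=> H t /mapP [t0 /H h ->]. Qed.

Lemma goodD_mono m n (D : seq (k * word * nat * word)) : (m <= n)%N -> goodD m D -> goodD n D.
Proof. by move=> h H t /H [h1 h2]; split => //; lia. Qed.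

Lemma two_occ L i R L' j R' : (i < 10)%N -> (j < 10)%N ->
  occ L i R = occ L' j R' ->
  exists D : seq (k * word * nat * word), goodD (M (occ L i R)) D /\
   forall w, fcoef (ctx L (relk k i) R) w = fcoef (ctx L' (relk k j) R') w + fcoef (combo D) w.
Proof.
move=> Hi Hj E.
case: (leqP (size L) (size L')) => Hs; first exact: two_occ_le.
have [D [HD HE]] := two_occ_le k Hj Hi (esym E) (ltnW Hs).
exists (scaleC (-1) D); split; first by rewrite E; apply: goodD_scale.
by move=> w; rewrite HE fcoef_combo_scale; ring.
Qed.

Lemma combo_low m (D : seq (k * word * nat * word)) w :
  goodD m D -> (m <= M w)%N -> fcoef (combo D) w = 0.
Proof.
move=> H Hm; rewrite fcoef_combo big_seq big1 // => [[[[c L] i] R]] /H [/= h1 h2].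
rewrite fcoef_term term_zero ?mulr0 //.
  by apply/eqP => E; rewrite /tword /= -E in h2; lia.
rewrite /tword /= in h2; lia.
Qed.

Lemma indep_step n L0 i0 R0 (C : seq (k * word * nat * word)) :
  (i0 < 10)%N -> M (occ L0 i0 R0) = n -> goodD n.+1 C ->
  exists (s : k) (D : seq (k * word * nat * word)), goodD n D /\
    forall w, fcoef (combo C) w = s * fcoef (ctx L0 (relk k i0) R0) w + fcoef (combo D) w.
Proof.
move=> Hi0 Hn; elim: C => [|t C IH] HC.
  by exists 0, [::]; split => // w; rewrite /combo /= fcoef_nil mul0r addr0.
have [|s [D [HD HE]]] := IH.
  by move=> u uC; apply: HC; rewrite inE uC orbT.
have [Ht1 Ht2] := HC t (mem_head _ _).
move: t HC Ht1 Ht2 => [[[c L] i] R] HC /= Ht1 Ht2.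
case: (ltnP (M (tword (c, L, i, R))) n) => Hlt.
  exists s, ((c, L, i, R) :: D); split.
    by move=> u; rewrite inE => /orP[/eqP -> //|/HD].
  by move=> w; rewrite !fcoef_combo_cons HE; ring.
have Heq : M (tword (c, L, i, R)) = M (occ L0 i0 R0) by rewrite Hn; lia.
have Eo : occ L i R = occ L0 i0 R0 by apply: M_inj.
have [Dt [HDt HEt]] := two_occ Ht1 Hi0 Eo.
exists (c + s), (scaleC c Dt ++ D); split.
  apply: goodD_cat => //; apply: goodD_scale.
  by apply: goodD_mono HDt; rewrite Eo Hn.
move=> w; rewrite fcoef_combo_cons fcoef_term HEt HE fcoef_combo_cat fcoef_combo_scale.
ring.
Qed.

Lemma indep n (C : seq (k * word * nat * word)) : goodD n C ->
  (forall w, ~~ normalb w -> fcoef (combo C) w = 0) -> forall w, fcoef (combo C) w = 0.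
Proof.
elim: n C => [|n IH] C HC Hn.
  case: C HC Hn => [|t C] HC Hn w; first by rewrite /combo /= fcoef_nil.
  by have [_] := HC t (mem_head _ _).
case: (boolP (has (fun t => M (tword t) == n) C)) => Hh.
  case/hasP: Hh => [[[[c L0] i0] R0]] tin /eqP Hn0.
  have [Hi0 _] := HC _ tin.
  have [s [D [HD HE]]] := indep_step Hi0 Hn0 HC.
  have Hs : s = 0.
    have := Hn (occ L0 i0 R0) (occ_not_normal _ _ Hi0).
    rewrite HE term_lead // (combo_low HD) ?Hn0 // addr0 mulr1 //.
  have HE' : forall w, fcoef (combo C) w = fcoef (combo D) w.
    by move=> w; rewrite HE Hs mul0r add0r.
  move=> w; rewrite HE'; apply: (IH D HD) => w' Hw'.
  by rewrite -HE'; apply: Hn.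
apply: IH => // t tC; have [h1 h2] := HC t tC; split => //.
have : M (tword t) != n by apply: contraNneq Hh => E; apply/hasP; exists t => //; rewrite E.
lia.
Qed.

End Ind.

Lemma rels_relk (k : fieldType) i w : (i < 10)%N ->
  fcoef (nth [::] (rels k) i) w = (eps i)%:~R * fcoef (relk k i) w.
Proof.
move=> Hi; rewrite /relk fcoef_emb.
do 10 (case: i Hi => [|i] Hi; [ rewrite /rels /fsub /fscale /fmon /= /fcoef /icoef /lhs /rhs /eps !big_cons !big_nil /=;
   repeat (case: eqP => _) => /=; rewrite ?mulrzDr ?mulrNz ?mulr1z ?mulr0z; ring | ]).
done.
Qed.

Local Close Scope ring_scope.

Definition bad (g : gen) (w : word) : bool :=
  match g, w with
  | gc, ga :: _ | gc, gb :: _ => true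
  | gd, ga :: _ | gd, gb :: _ => true
  | gd, gdeli :: ga :: _ | gd, gdeli :: gc :: _ => true
  | gb, gdeli :: ga :: _ | gb, gdeli :: gc :: _ => true
  | gdel, gdeli :: _ => true
  | gdeli, gdel :: _ => true
  | _, _ => false
  end.

Lemma bad_prefix g w : has (fun i => prefix (lhs i) (g :: w)) (iota 0 10) = bad g w.
Proof.
case: g; case: w => [|h1 w]; try case: h1; try case: w => [|h2 w]; try case: h2; try by []; by rewrite /= !prefix0s.
Qed.

Lemma normalb_cons g w : normalb (g :: w) = ~~ bad g w && normalb w.
Proof.
rewrite /normalb -negb_or -bad_prefix -has_predU; congr (~~ _).
Qed.

Lemma normalb_nil : normalb [::].
Proof. by []. Qed.

Lemma build_cons x0 w1 x1 ps : build x0 ((w1, x1) :: ps) = dpow x0 ++ w1 ++ build x1 ps.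
Proof. by rewrite /build /= -!catA. Qed.

Lemma build_nil x0 : build x0 [::] = dpow x0.
Proof. by rewrite /build /= cats0. Qed.

Lemma basis_nil : basis_word [::].
Proof. by exists 0%Z, [::]. Qed.

Lemma basis_cons g w : basis_word w -> ~~ bad g w -> basis_word (g :: w).
Proof.
case=> x0 [ps [Hok ->]] Hbad.
have letter : is_abcd g -> basis_word (g :: build x0 ps).
  move=> Hg.
  case: x0 Hbad => [[|n]|n] Hbad.
  - case: ps Hok Hbad => [|[w1 x1] ps'] Hok Hbad.
      by exists 0%Z, [:: ([:: g], 0%Z)]; split; [rewrite /= /good_word /= Hg | rewrite build_cons build_nil].
    exists 0%Z, ((g :: w1, x1) :: ps'); split; last by rewrite !build_cons.
    move: Hok => /= Hok; case/and3P: Hok => Hw1 Hc Hok; rewrite Hok andbT.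
    case: w1 Hw1 Hc Hbad => [|h w1] //.
    rewrite /good_word /= => /andP [/andP [Hh Hall] Hs] Hc Hbad.
    rewrite Hg Hh Hall /= Hs andbT Hc andbT.
    move: Hbad; rewrite build_cons /=.
    by case: g Hg {Hc}; case: h Hh {Hs}.
  - exists 0%Z, (([:: g], Posz n.+1) :: ps); split; last by rewrite build_cons.
    rewrite /= /good_word /= Hg Hok /=.
    by case: ps {Hok Hbad} => [|[? ?] ?].
  - exists 0%Z, (([:: g], Negz n) :: ps); split; last by rewrite build_cons.
    rewrite /= /good_word /= Hg Hok /=.
    case: ps Hok Hbad => [|[w1 x1] ps'] Hok Hbad //=.
    case: n Hbad => [|n] Hbad //.
    move: Hok => /= Hok; case/and3P: Hok => Hw1 _ _.
    case: w1 Hw1 Hbad => [|h w1] //.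
    rewrite /good_word /= => /andP [/andP [Hh _] _].
    rewrite build_cons /=.
    by case: g Hg; case: h Hh.
case: g Hbad letter => Hbad letter; try by apply: letter.
all: clear letter.
- case: x0 Hbad => [n|n] Hbad; last by case: n Hbad.
  by exists (Posz n.+1), ps.
- case: x0 Hbad => [[|n]|n] Hbad.
  + by exists (Negz 0), ps.
  + by [].
  + by exists (Negz n.+1), ps.
Qed.

Lemma normal_basis w : normalb w -> basis_word w.
Proof.
elim: w => [|g w IH]; first by move=> _; exact: basis_nil.
by rewrite normalb_cons => /andP [Hb Hn]; apply: basis_cons => //; apply: IH.
Qed.

Lemma basis_uncons g w : basis_word (g :: w) -> basis_word w /\ ~~ bad g w.
Proof.
case=> x0 [ps [Hok E]].
case: x0 E => [[|n]|n] E.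
- case: ps Hok E => [|[w1 x1] ps'] Hok E; first by rewrite build_nil in E.
  rewrite build_cons /= in E.
  move: Hok => /= Hok; case/and3P: Hok => Hw1 Hc Hok.
  case: w1 Hw1 Hc E => [|h w1] //.
  rewrite /good_word /= => /andP [/andP [Hh Hall] Hs] Hc [Eg Ew]; subst h w.
  case: w1 Hall Hs Hc => [|h2 w1] Hall Hs Hc.
  +
    split; first by exists x1, ps'.
    clear Hs Hall; rewrite /=.
    case: x1 Hc => [[|n]|n] Hc.
    * case: ps' Hok Hc => [|[w2 x2] ps''] Hok Hc //.
      by case: g Hh.
    * by case: g Hh Hc.
    * case: n Hc => [|n] Hc.
        case: ps' Hok Hc => [|[w2 x2] ps''] Hok Hc; first by case: g Hh.
        move: Hok => /= Hok; case/and3P: Hok => Hw2 _ _.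
        case: w2 Hw2 Hc => [|h3 w2] //.
        rewrite /good_word /= => /andP [/andP [Hh3 _] _] Hc.
        rewrite build_cons /=.
        by case: g Hh Hc; case: h3 Hh3.
      by case: g Hh Hc.
  + split.
      exists 0%Z, ((h2 :: w1, x1) :: ps'); split; last by rewrite build_cons.
      rewrite /= Hok andbT.
      move: Hs Hall Hc; rewrite /good_word /= => /andP [_ ->] /andP [-> ->] ->.
      by [].
    rewrite /=.
    move: Hs Hall => /andP [Hr _] /andP [Hh2 _].
    by clear Hc; case: g Hh Hr; case: h2 Hh2.
- rewrite /build /= in E; case: E => Eg Ew; subst g w.
  split; first by exists (Posz n), ps.
  case: n => [|n] //=.
  case: ps Hok => [|[w1 x1] ps'] Hok //=.
  move: Hok => /= Hok; case/and3P: Hok => Hw1 _ _.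
  case: w1 Hw1 => [|h w1] //.
  rewrite /good_word /= => /andP [/andP [Hh _] _].
  by case: h Hh.
- rewrite /build /= in E; case: E => Eg Ew; subst g w.
  split.
    case: n => [|n]; first by exists 0%Z, ps.
    by exists (Negz n), ps.
  case: n => [|n] //=.
  case: ps Hok => [|[w1 x1] ps'] Hok //=.
  move: Hok => /= Hok; case/and3P: Hok => Hw1 _ _.
  case: w1 Hw1 => [|h w1] //.
  rewrite /good_word /= => /andP [/andP [Hh _] _].
  by case: h Hh.
Qed.

Lemma basis_normal w : basis_word w -> normalb w.
Proof.
elim: w => [|g w IH] // /basis_uncons [Hb Hn].
by rewrite normalb_cons Hn IH.
Qed.

Local Open Scope ring_scope.

Section Span.
Variable k : fieldType.

Definition spans (p : fpoly k) :=
  exists (s : fpoly k) (C : seq (k * word * nat * word)),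
    (forall t, t \in s -> normalb t.2) /\ (forall t, t \in C -> (t.1.2 < 10)%N) /\
    forall w, fcoef p w = fcoef s w + fcoef (combo C) w.

Lemma spans_cat p q : spans p -> spans q -> spans (p ++ q).
Proof.
move=> [s1 [C1 [h1 [h2 h3]]]] [s2 [C2 [g1 [g2 g3]]]].
exists (s1 ++ s2), (C1 ++ C2); split.
  by move=> t; rewrite mem_cat => /orP [/h1|/g1].
split; first by move=> t; rewrite mem_cat => /orP [/h2|/g2].
by move=> w; rewrite fcoef_cat h3 g3 fcoef_cat fcoef_combo_cat; ring.
Qed.

Lemma spans_list (p : fpoly k) : (forall t, t \in p -> spans [:: t]) -> spans p.
Proof.
elim: p => [|t p IH] H.
  by exists [::], [::]; split => //; split => // w; rewrite /combo /= !fcoef_nil addr0.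
rewrite -cat1s; apply: spans_cat; first by apply: H; rewrite mem_head.
by apply: IH => x xp; apply: H; rewrite inE xp orbT.
Qed.

Lemma not_normal_occ u : ~~ normalb u -> exists L i R, (i < 10)%N /\ u = occ L i R.
Proof.
rewrite /normalb negbK => /hasP [i]; rewrite mem_iota add0n => /andP [_ Hi] /infixP [L [R ->]].
by exists L, i, R.
Qed.

Lemma fcoef_ctx_neg L R (f : ip) w :
  fcoef (ctx L (emb k [seq (- t.1, t.2) | t <- f]) R) w = - fcoef (ctx L (emb k f) R) w.
Proof.
rewrite /ctx /emb -!map_comp /fcoef !big_map -sumrN; apply: eq_bigr => t _ /=.
by case: ifP; rewrite ?mulrNz ?oppr0.
Qed.

Lemma spans_n n : forall u c, (M u < n)%N -> spans [:: (c, u)].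
Proof.
elim: n => [|n IH] u c Hu //.
case: (boolP (normalb u)) => Hn.
  exists [:: (c, u)], [::]; split; first by move=> t; rewrite inE => /eqP ->.
  by split => // w; rewrite /combo /= fcoef_nil addr0.
have [L [i [R [Hi Eu]]]] := not_normal_occ Hn.
have HuL : (M (L ++ lhs i ++ R) < n.+1)%N by rewrite -/(occ L i R) -Eu.
have Hp : spans (fscale c (ctx L (emb k (rhs i)) R)).
  apply: spans_list => t /mapP [t1 /mapP [t2 /mapP [v vin ->] ->] ->] /=.
  apply: IH.
  have := allP (rhs_lt Hi) v.2 (map_f _ vin) => /(M_mono L R).
  move=> h; apply: (leq_trans h); rewrite -ltnS; exact: HuL.
have [s [C [h1 [h2 h3]]]] := Hp.
exists s, ((c, L, i, R) :: C); split => //.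
split; first by move=> t; rewrite inE => /orP [/eqP -> //|/h2].
move=> w; rewrite fcoef_combo_cons fcoef_term relk_eq.
rewrite -[ctx L _ R]/((1, L ++ lhs i ++ R) :: ctx L (emb k [seq (- t.1, t.2) | t <- rhs i]) R).
rewrite (fcoef_cons (1, L ++ lhs i ++ R)) fcoef_ctx_neg.
have := h3 w; rewrite fcoef_scale => h3w.
rewrite Eu /occ fcoef_cons fcoef_nil /=.
have -> : fcoef s w = c * fcoef (ctx L (emb k (rhs i)) R) w - fcoef (combo C) w by rewrite h3w; ring.
case: eqP => _; ring.
Qed.

End Span.

Section Final.
Variable k : fieldType.

Lemma fmul_ctx L R (p : fpoly k) w :
  fcoef (fmul (fmul (fmon k L) p) (fmon k R)) w = fcoef (ctx L p R) w.
Proof.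
rewrite /fmul /fmon /ctx /= !cats0.
elim: p => [|t p IH] //=.
by rewrite !fcoef_cons IH mul1r mulr1 catA.
Qed.

Lemma eps_sq i : (i < 10)%N -> ((eps i)%:~R * (eps i)%:~R : k) = 1.
Proof. by move=> Hi; rewrite -intrM; do 10 (case: i Hi => [|i] Hi //). Qed.

Lemma size_rels : size (rels k) = 10%N.
Proof. by []. Qed.

Lemma rels_term c L i R w : (i < 10)%N ->
  fcoef (fscale (c * (eps i)%:~R) (fmul (fmul (fmon k L) (nth [::] (rels k) i)) (fmon k R))) w =
  fcoef (term (c, L, i, R)) w.
Proof.
move=> Hi; rewrite fcoef_scale fmul_ctx fcoef_term.
have H : forall w', fcoef (nth [::] (rels k) i) w' = fcoef (fscale (eps i)%:~R (relk k i)) w'.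
  by move=> w'; rewrite rels_relk // fcoef_scale.
by rewrite (feq_ctx L R H) ctx_scale fcoef_scale mulrA -(mulrA c) eps_sq // mulr1.
Qed.

Lemma fcoef_flat_rels (Sl : seq (k * word * fpoly k * word)) w :
  fcoef (flatten [seq fscale t.1.1.1 (fmul (fmul (fmon k t.1.1.2) t.1.2) (fmon k t.2)) | t <- Sl]) w =
  \sum_(t <- Sl) fcoef (fscale t.1.1.1 (fmul (fmul (fmon k t.1.1.2) t.1.2) (fmon k t.2))) w.
Proof. by rewrite fcoef_flatten big_map. Qed.

Lemma span_part u : exists s : seq (k * word),
  (forall t, t \in s -> basis_word t.2) /\ in_ideal (fsub (fmon k u) s).
Proof.
have [s [C [h1 [h2 h3]]]] := @spans_n k (M u).+1 u 1 (ltnSn _).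
exists s; split; first by move=> t /h1; apply: normal_basis.
exists [seq (t.1.1.1 * (eps t.1.2)%:~R, t.1.1.2, nth [::] (rels k) t.1.2, t.2) | t <- C].
split.
  move=> t /mapP [t0 /h2 Hi ->] /=; apply: mem_nth; by rewrite size_rels.
move=> w; rewrite fcoef_flat_rels big_map /fsub fcoef_cat fcoef_scale.
have -> : fcoef (fmon k u) w = fcoef s w + fcoef (combo C) w by exact: h3.
rewrite fcoef_combo big_seq [X in _ = X]big_seq.
rewrite [X in _ = X](eq_bigr (fun t => fcoef (term t) w)); first by ring.
move=> [[[c L] i] R] /h2 /= Hi; exact: rels_term.
Qed.

Lemma fcoef_uniq (s : seq (k * word)) t : uniq (map snd s) -> t \in s -> fcoef s t.2 = t.1.
Proof.
elim: s => [|x s IH] //= /andP [Hx Hu]; rewrite inE => /orP [/eqP ->|ts].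
  rewrite fcoef_cons eqxx fcoef_out ?addr0 // => y ys; apply: contraNneq Hx => <-.
  exact: map_f.
rewrite fcoef_cons IH //.
case: eqP => [E|_]; last by rewrite add0r.
by move: Hx; rewrite E (map_f snd ts).
Qed.

Definition maxM (C : seq (k * word * nat * word)) : nat :=
  foldr (fun t acc => maxn (M (tword t)) acc) 0%N C.

Lemma maxM_ge C t : t \in C -> (M (tword t) <= maxM C)%N.
Proof.
elim: C => [|x C IH] //=; rewrite inE => /orP [/eqP ->|tC]; first exact: leq_maxl.
by apply: leq_trans (IH tC) _; apply: leq_maxr.
Qed.

Lemma indep_part (s : seq (k * word)) :
  uniq (map snd s) -> (forall t, t \in s -> basis_word t.2) -> in_ideal s ->
  forall t, t \in s -> t.1 = 0.
Proof.
move=> Hu Hb [Sl [Hrels Hfeq]] t ts.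
set C := [seq (t.1.1.1 * (eps (index t.1.2 (rels k)))%:~R, t.1.1.2, index t.1.2 (rels k), t.2) | t <- Sl].
have HC : forall w, fcoef s w = fcoef (combo C) w.
  move=> w; rewrite Hfeq fcoef_flat_rels fcoef_combo big_map big_seq [X in _ = X]big_seq.
  apply: eq_bigr => [[[[c L] r] R]] /Hrels /= Hr.
  have Hi : (index r (rels k) < 10)%N by rewrite -size_rels index_mem.
  rewrite -[LHS]/(fcoef (fscale c (fmul (fmul (fmon k L) r) (fmon k R))) w).
  rewrite -[RHS]/(fcoef (term (c * (eps (index r (rels k)))%:~R, L, index r (rels k), R)) w).
  by have := rels_term (c * (eps (index r (rels k)))%:~R) L R w Hi; rewrite -mulrA eps_sq // mulr1 (nth_index [::] Hr) => ->.
have Hg : goodD (maxM C).+1 C.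
  move=> x xC; split; last by rewrite ltnS; apply: maxM_ge.
  case/mapP: xC => y /Hrels Hy ->; change (index y.1.2 (rels k) < 10)%N; rewrite -size_rels index_mem; exact: Hy.
have H0 := indep Hg.
have Hz : forall w, fcoef (combo C) w = 0.
  apply: H0 => w Hw; rewrite -HC; apply: fcoef_out => x xs.
  apply: contraNneq Hw => <-; apply: basis_normal; exact: Hb.
by rewrite -(fcoef_uniq Hu ts) HC Hz.
Qed.

End Final.

Unset Implicit Arguments.
Theorem mainTheorem12 (k : fieldType) :
  (forall u : word,
     exists s : seq (k * word),
       (forall t, t \in s -> basis_word t.2) /\
       in_ideal (fsub (fmon k u) s)) /\
  (forall s : seq (k * word),
     uniq (map snd s) ->
     (forall t, t \in s -> basis_word t.2) ->
     in_ideal s ->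
     forall t, t \in s -> t.1 = 0).
Proof.
split; [exact: span_part | exact: indep_part].
Qed.
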